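(* If $G$ is a $4$-regular graph on $7$ vertices, then $\mu(G)\le 3$.
   Context: All graphs are finite and simple. For a graph $G=(V,E)$ on $n$ vertices, a fractional vertex cover is a function $f:V\to[0,\infty)$ with $f(u)+f(v)\ge 1$ for every edge $uv\in E$; $\tau^*(G)$ denotes the minimum of $\sum_{v\in V}f(v)$ over all fractional vertex covers. For $E'\subseteq E$ let $G-E'=(V,E\setminus E')$. Define $\mu(G)=\min\{|E'| : E'\subseteq E,\ \tau^*(G-E')<n/2\}$. *)

(* Defs.v *)
From HB Require Import structures.
From mathcomp Require Import all_boot all_order all_algebra.
From mathcomp Require Import classical_sets reals.
Set Implicit Arguments. Unset Strict Implicit. Unset Printing Implicit Defensive.
Import Order.TTheory GRing.Theory Num.Theory.
Local Open Scope ring_scope.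

(* A finite simple graph on vertex type T is given by its edge set E:
   a set of 2-element subsets of T. *)
Definition simple_edges (T : finType) (E : {set {set T}}) : Prop :=
  forall e, e \in E -> #|e| = 2%N.

Definition degree (T : finType) (E : {set {set T}}) (v : T) : nat :=
  #|[set e in E | v \in e]|.

Definition regular (T : finType) (E : {set {set T}}) (k : nat) : Prop :=
  forall v, degree E v = k.

Definition frac_cover (R : realType) (T : finType) (E : {set {set T}})
  (f : T -> R) : Prop :=
  (forall v, 0 <= f v) /\
  (forall u v, u != v -> [set u; v] \in E -> 1 <= f u + f v).

(* tau^*(G): minimum (= infimum, attained) of the total weight of a
   fractional vertex cover *)
Definition tau_star (R : realType) (T : finType) (E : {set {set T}}) : R :=
  inf [set s : R | exists f : T -> R, frac_cover E f /\ s = \sum_(v : T) f v].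

Definition del_edges (T : finType) (E E' : {set {set T}}) : {set {set T}} :=
  E :\: E'.

(* Main.v *)
Require Import Defs.
From HB Require Import structures.
From mathcomp Require Import all_boot all_order all_algebra.
From mathcomp Require Import classical_sets reals lra.
From Stdlib Require Import Lia.
From mathcomp Require Import zify.
Import Order.TTheory GRing.Theory Num.Theory.
Local Open Scope ring_scope.
Set Implicit Arguments. Unset Strict Implicit.

Lemma tau_le (R : realType) (T : finType) (E : {set {set T}}) (B : {set T}) :
  (forall e, e \in E -> ~~ (e \subset B)) ->
  tau_star R E <= #|~: B|%:R.
Proof.
move=> HB; rewrite /tau_star.
have : has_lbound [set s : R | exists f : T -> R, frac_cover E f /\ s = \sum_(v : T) f v].
  exists 0 => s [f [[f0 _] ->]]; exact: sumr_ge0.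
move/ge_inf; apply.
exists (fun v => if v \in B then 0 else 1); split; last first.
  rewrite (bigID (fun v => v \in B)) /= big1 ?add0r; last by move=> i ->.
  rewrite (eq_bigr (fun _ => 1)); last by move=> i /negbTE ->.
  by rewrite sumr_const cardsE; congr (_%:R); apply: eq_card => x; rewrite !inE.
split; first by move=> v; case: ifP.
move=> u v _ /HB; rewrite finset.subUset !finset.sub1set.
idtac.
by case: (u \in B) => /=; case: (v \in B) => /=; rewrite ?addr0 ?add0r // lerDl.
Qed.

Section Comb.
Variables (T : finType) (E : {set {set T}}).
Hypothesis HS : simple_edges E.

Definition nbr (v : T) := [set u | [set v; u] \in E].

Lemma nbr_neq v u : u \in nbr v -> u != v.
Proof.
rewrite inE => /HS H; apply/eqP => uv; move: H.
by rewrite uv finset.setUid cards1.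
Qed.

Lemma deg_nbr v : degree E v = #|nbr v|.
Proof.
rewrite /degree.
have -> : [set e in E | v \in e] = [set [set v; u] | u in nbr v].
  apply/setP => e; rewrite inE; apply/andP/imsetP.
  - move=> [eE ve]; have /eqP/cards2P [a [b [ab ee]]] := HS eE.
    move: ve; rewrite ee !inE => /orP [] /eqP ->.
      by exists b; rewrite // /nbr inE -ee.
    exists a; last exact: finset.setUC.
    by rewrite /nbr inE finset.setUC -ee.
  - move=> [u uN ->]; split; first by rewrite /nbr inE in uN.
    by rewrite !inE eqxx.
rewrite card_in_imset // => a b aN bN eq.
have : a \in [set v; b] by rewrite -eq !inE eqxx orbT.
rewrite !inE => /orP [] /eqP // av.
by move: (nbr_neq aN); rewrite av eqxx.
Qed.
End Comb.

Lemma final (R : realType) (T : finType) (E : {set {set T}}) (B : {set T})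
  (P1 P2 P3 : {set T}) :
  #|T| = 7%N -> simple_edges E -> (4 <= #|B|)%N ->
  (forall p q, p \in B -> q \in B -> p != q -> [set p; q] \in E ->
     [set p; q] \in [set P1; P2; P3]) ->
  exists E' : {set {set T}},
    [/\ E' \subset E, (#|E'| <= 3)%N &
        tau_star R (del_edges E E') < (#|T|%:R / 2)].
Proof.
move=> HT HS HB HP.
exists [set e in E | e \subset B]; split.
- by apply/fintype.subsetP => e; rewrite inE => /andP [].
- apply: (leq_trans (n := #|[set P1; P2; P3]|)).
    apply: subset_leq_card; apply/fintype.subsetP => e; rewrite inE => /andP [eE eB].
    have /eqP/cards2P [p [q [pq ee]]] := HS _ eE.
    move: eB eE; rewrite ee finset.subUset !finset.sub1set => /andP [pB qB].
    exact: HP.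
  by rewrite cardsU cardsU1 !cards1; case: (_ \notin _) => /=; lia.
- apply: (le_lt_trans (@tau_le R T _ B _)).
    by move=> e; rewrite /del_edges !inE => /andP [] H eE; apply/negP => eB; move: H; rewrite eE eB.
  have : (#|~: B| <= 3)%N by move: (cardsC B); rewrite HT; lia.
  move=> h; have -> : (#|T|%:R : R) = 7%:R by congr (_%:R); exact: HT.
  have : #|~: B|%:R <= 3%:R :> R by rewrite Num.Theory.ler_nat. lra.
Qed.

Definition nn (T : finType) (E : {set {set T}}) v := ~: nbr E v :\ v.

Lemma in_nn (T : finType) (E : {set {set T}}) v u :
  (u \in nn E v) = (u != v) && ([set v; u] \notin E).
Proof. by rewrite /nn /nbr !inE. Qed.

Lemma card_nn (T : finType) (E : {set {set T}}) v :
  #|T| = 7%N -> simple_edges E -> regular E 4 -> #|nn E v| = 2%N.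
Proof.
move=> HT HS HR.
have := cardsD1 v (~: nbr E v); rewrite -/(nn E v).
have -> : v \in ~: nbr E v.
  by rewrite inE; apply/negP => /(nbr_neq HS); rewrite eqxx.
have := cardsC (nbr E v); rewrite -deg_nbr // HR HT.
lia.
Qed.

Lemma setUC2 (T : finType) (a b : T) : [set a; b] = [set b; a].
Proof. exact: finset.setUC. Qed.


Lemma card4 (T : finType) (a b c d : T) :
  a != b -> a != c -> a != d -> b != c -> b != d -> c != d ->
  #|[set a; b; c; d]| = 4%N.
Proof.
move=> ab ac ad bc bd cd.
have -> : [set a; b; c; d] = [set t in [:: a; b; c; d]].
  by apply/setP => t; rewrite !inE -!orbA.
rewrite cardsE; apply/card_uniqP.
by rewrite /= !inE !negb_or ab ac ad bc bd cd.
Qed.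

Lemma card3le (T : finType) (a b c : T) : (#|[set a; b; c]| <= 3)%N.
Proof.
have -> : [set a; b; c] = [set t in [:: a; b; c]].
  by apply/setP => t; rewrite !inE -!orbA.
by rewrite cardsE; apply: leq_trans (card_size _) _.
Qed.

Theorem lemma32 (R : realType) (T : finType) (E : {set {set T}}) :
  #|T| = 7%N -> simple_edges E -> regular E 4 ->
  exists E' : {set {set T}},
    [/\ E' \subset E, (#|E'| <= 3)%N &
        tau_star R (del_edges E E') < (#|T|%:R / 2)].
Proof.
move=> HT HS HR.
have /card_gt0P [v _] : (0 < #|T|)%N by rewrite HT.
have /eqP/cards2P [x [y [xy Mv]]] := card_nn v HT HS HR.
have : x \in nn E v by rewrite Mv !inE eqxx.
rewrite in_nn => /andP [xv Nvx].
have : y \in nn E v by rewrite Mv !inE eqxx orbT.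
rewrite in_nn => /andP [yv Nvy].
have vMx : v \in nn E x by rewrite in_nn eq_sym xv setUC2.
have /cards1P [z Mxz] : #|nn E x :\ v| == 1%N.
  by move: (cardsD1 v (nn E x)); rewrite vMx card_nn //; case: (#|_|) => [|[]].
have : z \in nn E x :\ v by rewrite Mxz inE.
rewrite inE in_nn => /andP [zv /andP [zx Nxz]]; rewrite inE in zv.
case: (eqVneq z y) => [zy | zy].
- subst z.
  have : (0 < #|~: [set v; x; y]|)%N.
    by move: (cardsC [set v; x; y]) (card3le v x y); rewrite HT; lia.
  move/card_gt0P => [w]; rewrite !inE !negb_or => /andP [/andP [wv wx] wy].
  apply: (@final R T E [set v; x; y; w] [set v; w] [set x; w] [set y; w] HT HS).
    rewrite card4 //; by rewrite eq_sym.
  move=> p q; rewrite !inE -!orbA. move=> /or4P [] /eqP -> /or4P [] /eqP -> pq He;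
  first [ by rewrite eqxx in pq
        | by rewrite eqxx ?orbT
        | by rewrite setUC2 eqxx ?orbT
        | by rewrite He in Nvx | by rewrite He in Nvy | by rewrite He in Nxz
        | by rewrite setUC2 He in Nvx | by rewrite setUC2 He in Nvy
        | by rewrite setUC2 He in Nxz ].
- apply: (@final R T E [set v; x; y; z] [set v; z] [set x; y] [set y; z] HT HS).
    rewrite card4 //; by rewrite eq_sym.
  move=> p q; rewrite !inE -!orbA => /or4P [] /eqP -> /or4P [] /eqP -> pq He;
  first [ by rewrite eqxx in pq
        | by rewrite eqxx ?orbT
        | by rewrite setUC2 eqxx ?orbT
        | by rewrite He in Nvx | by rewrite He in Nvy | by rewrite He in Nxz
        | by rewrite setUC2 He in Nvx | by rewrite setUC2 He in Nvy
        | by rewrite setUC2 He in Nxz ].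
Qed.
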